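(* Let $G$ be an abelian Hausdorff topological group and $A\subseteq G$ with $0\notin A$. The following are equivalent: (i) $A$ is absolutely summable in $G$; (ii) the Kalton map $K_A:S_A\to G$ is continuous and its continuous extension $\overline{K_A}:P_A\to\overline{G}$ satisfies $\overline{K_A}(P_A)\subseteq G$. Furthermore, if these equivalent conditions hold, then $\overline{K_A}(h)=\sum_{a\in A}K_A(h_a)$ for every $h=\{h_a\}_{a\in A}\in P_A$ (the sum taken in the sense of summability of the indexed family $\{K_A(h_a)\}_{a\in A}$ in $G$).
   Context: $\overline{H}$ denotes the completion of a topological group $H$. For $a\in G$, $\langle a\rangle$ is the cyclic subgroup generated by $a$ with the subspace topology. $P_A=\prod_{a\in A}\langle a\rangle$ has the Tychonoff product topology and $S_A=\bigoplus_{a\in A}\langle a\rangle\subseteq P_A$ the subspace topology; the summand $\langle a\rangle$ of $S_A$ is identified with the corresponding coordinate subgroup. The Kalton map $K_A:S_A\to G$ is the unique homomorphism extending each inclusion $\langle a\rangle\to G$. When $K_A$ is continuous it extends uniquely to a continuous homomorphism $\overline{S_A}\to\overline{G}$; as $\overline{S_A}=\prod_{a\in A}\overline{\langle a\rangle}\supseteq P_A$, its restriction to $P_A$ is denoted $\overline{K_A}$. An indexed family $\{x_a:a\in A\}$ has sum $g=\sum_{a\in A}x_a$ if for every neighbourhood $U$ of $0$ there is a finite $F\subseteq A$ with $g-\sum_{a\in E}x_a\in U$ for every finite $E\subseteq A$ containing $F$. $A$ is absolutely summable if for every family $\{z_a:a\in A\}$ of integers the family $\{z_aa:a\in A\}$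 has a sum in $G$. *)

(* Defs.v *)
From HB Require Import structures.
From mathcomp Require Import all_boot all_order all_algebra.
From mathcomp Require Import all_classical all_reals all_analysis.
Unset Printing Implicit Defensive.
Import GRing.Theory Num.Theory.
Local Open Scope classical_set_scope.
Local Open Scope ring_scope.

Section Kalton.
Context {G : topologicalZmodType}.

Definition cyclic_sub (a : G) : set G := [set x | exists z : int, x = a *~ z].

Definition Aidx (A : set G) : choiceType := {x : G | x \in A}.

Definition has_sum {I : choiceType} (x : I -> G) (g : G) : Prop :=
  forall U : set G, nbhs (0 : G) U ->
    exists F : set I, finite_set F /\
      forall E : set I, finite_set E -> F `<=` E -> U (g - \sum_(i \in E) x i).

Definition abs_summable (A : set G) : Prop :=
  forall z : Aidx A -> int, exists g : G, has_sum (fun a => (val a) *~ z a) g.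

(* P_A = prod_{a in A} <a>, as a subspace of the product space G^A *)
Definition P_A (A : set G) : set {ptws Aidx A -> G} :=
  [set h | forall a, cyclic_sub (val a) (h a)].

Definition S_A (A : set G) : set {ptws Aidx A -> G} :=
  [set h | P_A A h /\ finite_set [set a | h a != 0]].

(* Kalton map (meaningful on S_A): sum of the finitely many nonzero coordinates *)
Definition kalton (A : set G) (h : {ptws Aidx A -> G}) : G :=
  \sum_(a \in [set a | h a != 0]) h a.

Definition kcoord (A : set G) (a : Aidx A) (x : G) : {ptws Aidx A -> G} :=
  fun b => if b == a then x else 0.

End Kalton.

(* Main.v *)
Require Import Defs.
From HB Require Import structures.
From mathcomp Require Import all_boot all_order all_algebra.
From mathcomp Require Import all_classical all_reals all_analysis.
Import GRing.Theory Num.Theory.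
Local Open Scope classical_set_scope.
Local Open Scope ring_scope.

Lemma zmod_id (G : zmodType) (a b c d : G) :
  a = b + ((a - c) + -(b - d) + (c - d)).
Proof. by rewrite opprB addrAC !subrKA subrKC. Qed.

Lemma ptws_cvg (I : choiceType) (V : topologicalType)
  (F : set_system {ptws I -> V}) (f : {ptws I -> V}) : Filter F ->
  (forall i, (fun g : {ptws I -> V} => g i) @ F --> f i) -> F --> f.
Proof.
move=> FF H.
apply/cvg_sup => i.
apply/cvg_image.
  apply/seteqP; split => [y _ //|y _].
  by exists (fun _ => y).
move=> U /H /= FU.
exists ((fun g : {ptws I -> V} => g i) @^-1` U) => //.
apply/seteqP; split => [y [g Ug <-] //|y Uy].
exists (fun j => if j == i then y else f j) => /=.
by rewrite eqxx.
by rewrite eqxx.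
Qed.

Section T.
Context {G : topologicalZmodType}.

Lemma nbhs0_add (U : set G) : nbhs 0 U ->
  exists2 W : set G, nbhs 0 W & forall x y, W x -> W y -> U (x + y).
Proof.
move=> U0.
have := @add_continuous G (0, 0) U; rewrite /= addr0 => /(_ U0).
case=> -[P Q] /= [P0 Q0] PQ.
exists (P `&` Q); first exact: filterI.
by move=> x y [Px _] [_ Qy]; apply: (PQ (x, y)).
Qed.

Lemma nbhs0_sub (U : set G) : nbhs 0 U ->
  exists2 W : set G, nbhs 0 W & forall x y, W x -> W y -> U (x - y).
Proof.
move=> U0.
have := @sub_continuous G (0, 0) U; rewrite /= subr0 => /(_ U0).
case=> -[P Q] /= [P0 Q0] PQ.
exists (P `&` Q); first exact: filterI.
by move=> x y [Px _] [_ Qy]; apply: (PQ (x, y)).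
Qed.

Lemma nbhs0_opp (U : set G) : nbhs 0 U -> nbhs 0 [set x | U (- x)].
Proof.
move=> U0; have := @opp_continuous G 0 U; rewrite /= oppr0; exact.
Qed.

Lemma nbhs_shift (x : G) (U : set G) : nbhs 0 U -> nbhs x [set y | U (y - x)].
Proof.
move=> U0.
have : continuous (fun y : G => y - x).
  move=> y; apply: (@continuous_comp _ _ _ (fun y => (y, x)) (fun p : G * G => p.1 - p.2)).
    by apply: cvg_pair; [exact: cvg_id|exact: cvg_cst].
  exact: sub_continuous.
move=> /(_ x) /= H; apply: H; by rewrite subrr.
Qed.

Lemma nbhs_shift0 (x : G) (U : set G) : nbhs x U -> nbhs 0 [set y | U (x + y)].
Proof.
move=> Ux.
have : continuous (fun y : G => x + y).
  move=> y; apply: (@continuous_comp _ _ _ (fun y => (x, y)) (fun p : G * G => p.1 + p.2)).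
    by apply: cvg_pair; [exact: cvg_cst|exact: cvg_id].
  exact: add_continuous.
move=> /(_ 0) /= H; apply: H; by rewrite addr0.
Qed.

Lemma contD (T : topologicalType) (f g : T -> G) :
  continuous f -> continuous g -> continuous (fun x => f x + g x).
Proof.
move=> cf cg x.
apply: (@continuous_comp _ _ _ (fun x => (f x, g x)) (fun p : G * G => p.1 + p.2)).
  by apply: cvg_pair; [exact: cf|exact: cg].
exact: add_continuous.
Qed.

Lemma cont_seq (I : choiceType) (h : {ptws I -> G}) (s : seq I) :
  continuous (fun p : {ptws I -> G} => \sum_(i <- s) (p i - h i)).
Proof.
elim: s => [|i s IH].
  have -> : (fun p : {ptws I -> G} => \sum_(i <- [::]) (p i - h i)) = fun _ => 0.
    by apply: boolp.funext => p; rewrite big_nil.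
  exact: cst_continuous.
have -> : (fun p : {ptws I -> G} => \sum_(j <- i :: s) (p j - h j)) =
   fun p => (p i - h i) + \sum_(j <- s) (p j - h j).
  by apply: boolp.funext => p; rewrite big_cons.
apply: contD => //.
move=> x; apply: (@continuous_comp _ _ _ (fun p : {ptws I -> G} => p i) (fun y : G => y - h i)).
  exact: (@proj_continuous I (fun _ => G) i).
move=> y; apply: (@continuous_comp _ _ _ (fun y => (y, h i)) (fun p : G * G => p.1 - p.2)).
  by apply: cvg_pair; [exact: cvg_id|exact: cvg_cst].
exact: sub_continuous.
Qed.

Lemma cont_fsum (I : choiceType) (F0 : set I) (h : {ptws I -> G}) (W : set G) :
  finite_set F0 -> nbhs 0 W ->
  nbhs h [set p : {ptws I -> G} | W (\sum_(a \in F0) (p a - h a))].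
Proof.
move=> fF0 W0.
have := @cont_seq I h (finmap.enum_fset (fset_set F0)) h W.
rewrite big1; last by move=> i _; rewrite subrr.
move=> /(_ W0) H.
have : nbhs h (fun p : {ptws I -> G} => W (\sum_(i <- finmap.enum_fset (fset_set F0)) (p i - h i))) := H.
apply: filterS => p /=.
by rewrite fsbig_finite.
Qed.

Lemma fsumB (I : choiceType) (E : set I) (f g : I -> G) : finite_set E ->
  \sum_(a \in E) (f a - g a) = \sum_(a \in E) f a - \sum_(a \in E) g a.
Proof. by move=> fE; rewrite !fsbig_finite // sumrB. Qed.

Variable (A : set G).
Local Notation I := (Aidx A).

Lemma kalton_supp (p : {ptws I -> G}) (E : set I) :
  [set a | p a != 0] `<=` E -> kalton A p = \sum_(a \in E) p a.
Proof.
move=> sE; rewrite /kalton; apply: fsbig_widen => // a [_ /=] /negP.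
by rewrite negbK => /eqP.
Qed.

Lemma kcoordK a x : kalton A (kcoord A a x) = x.
Proof.
rewrite (@kalton_supp _ [set a]); first by rewrite fsbig_set1 /kcoord eqxx.
by move=> b /=; rewrite /kcoord; case: (b =P a) => // _; rewrite eqxx.
Qed.

Definition trunc (h : {ptws I -> G}) (E : set I) : {ptws I -> G} :=
  fun a => if a \in E then h a else 0.

Lemma trunc_PA h E : P_A A h -> P_A A (trunc h E).
Proof.
move=> Ph a; rewrite /trunc; case: ifP => _; first exact: Ph.
by exists 0; rewrite mulr0z.
Qed.

Lemma trunc_SA h E : P_A A h -> finite_set E -> S_A A (trunc h E).
Proof.
move=> Ph fE; split; first exact: trunc_PA.
apply: sub_finite_set fE => a /=; rewrite /trunc.
by case: ifP => [/set_mem //|_]; rewrite eqxx.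
Qed.

Lemma kalton_trunc h E : finite_set E -> kalton A (trunc h E) = \sum_(a \in E) h a.
Proof.
move=> fE; rewrite (@kalton_supp _ E).
  by apply: eq_fsbigr => a aE; rewrite /trunc aE.
by move=> a /=; rewrite /trunc; case: ifP => [/set_mem //|_]; rewrite eqxx.
Qed.

Definition finfilt : set_system (set I) :=
  filter_from [set F0 : set I | finite_set F0]
    (fun F0 => [set E | finite_set E /\ F0 `<=` E]).

Lemma finfilt_filter : Filter finfilt.
Proof.
apply: filter_from_filter; first by exists set0; exact: finite_set0.
move=> i j fi fj; exists (i `|` j); first by rewrite /= finite_setU.
move=> E [fE sE]; split; split => //.
  by apply: subset_trans sE => y ?; left.
by apply: subset_trans sE => y ?; right.
Qed.

Lemma ext_has_sum (F : {ptws I -> G} -> G) : {within P_A A, continuous F} ->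
  (forall h, S_A A h -> F h = kalton A h) ->
  forall h, P_A A h -> has_sum (fun a => h a) (F h).
Proof.
move=> /subspace_continuousP cF FK h Ph U U0.
have ff := finfilt_filter.
have tcvg : (trunc h) @ finfilt --> h.
  apply: ptws_cvg => i.
  move=> V /= /nbhs_singleton Vi.
  exists [set i]; first exact: finite_set1.
  move=> E [_ sE] /=; rewrite /trunc ifT //; apply/mem_set; exact: sE.
have wcvg : (trunc h) @ finfilt --> within (P_A A) (nbhs h).
  move=> W /= hW.
  have H : finfilt (trunc h @^-1` [set p | P_A A p -> W p]) := tcvg _ hW.
  change (finfilt (trunc h @^-1` W)).
  apply: filterS H => E /=; apply; exact: trunc_PA.
have Fcvg := cvg_trans (cvg_app F wcvg) (cF h Ph).
have V0 : nbhs (F h) [set y | U (F h - y)].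
  have := nbhs_shift (F h) _ (nbhs0_opp _ U0).
  by apply: filterS => y /=; rewrite opprB.
have [F0 fF0 HF0] := Fcvg _ V0.
exists F0; split => // E fE sE.
have := HF0 E (conj fE sE) => /=.
by rewrite (FK (trunc h E)) ?kalton_trunc //; exact: trunc_SA.
Qed.


Lemma unif_cauchy : abs_summable A -> forall W : set G, nbhs 0 W ->
  exists2 F0 : set I, finite_set F0 &
  forall (E : set I) (z : I -> int), finite_set E -> E `&` F0 = set0 ->
    W (\sum_(a \in E) val a *~ z a).
Proof.
move=> AS W W0; apply: contrapT => nH.
have nx : forall F0 : set I, exists p : set I * (I -> int),
    finite_set F0 -> [/\ finite_set p.1, p.1 `&` F0 = set0 &
                         ~ W (\sum_(a \in p.1) val a *~ p.2 a)].
  move=> F0; have [fF0|nf] := pselect (finite_set F0); last first.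
    by exists (set0, fun _ => 0).
  apply: contrapT => nex; apply: nH; exists F0 => // E z fE dE.
  apply: contrapT => nW; apply: nex; exists (E, z) => _; split => //.
case: (choice nx) => nxf nxP.
pose S := fix S n := if n is m.+1 then S m `|` (nxf (S m)).1 else set0.
pose E n := (nxf (S n)).1.
pose Z n := (nxf (S n)).2.
have fS : forall n, finite_set (S n).
  elim => [|n IH] /=; first exact: finite_set0.
  by rewrite finite_setU; split => //; case: (nxP (S n) IH).
have dE : forall n, E n `&` S n = set0.
  by move=> n; case: (nxP (S n) (fS n)).
have nW : forall n, ~ W (\sum_(a \in E n) val a *~ Z n a).
  by move=> n; case: (nxP (S n) (fS n)).
have fEn : forall n, finite_set (E n).
  by move=> n; case: (nxP (S n) (fS n)).
have SE : forall m n, (m < n)%N -> E m `<=` S n.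
  move=> m; elim => [//|n IH]; rewrite ltnS leq_eqVlt => /orP[/eqP ->|/IH].
    by move=> a Ea /=; right.
  by move=> sub a /sub Sa /=; left.
have uE : forall m n a, E m a -> E n a -> m = n.
  move=> m n a Ema Ena; case: (ltngtP m n) => // mn.
    have : (E n `&` S n) a by split => //; exact: (SE m n mn).
    by rewrite dE.
  have : (E m `&` S m) a by split => //; exact: (SE n m mn).
  by rewrite dE.
pose z a := Z (xget 0%N [set n | E n a]) a.
have zE : forall n a, E n a -> z a = Z n a.
  move=> n a Ena; rewrite /z (@xget_unique _ 0%N [set n | E n a] n) //.
  by move=> k Eka; exact: (uE k n a).
have [W2 W20 W2W] := nbhs0_sub _ W0.
have [g Hg] := AS z.
have [F [fF HF]] := Hg W2 W20.
have [n EnF] : exists n, E n `&` F = set0.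
  apply: contrapT => nex.
  have ex : forall n, exists a, E n a /\ F a.
    move=> n; apply: contrapT => nea; apply: nex; exists n.
    apply/seteqP; split => // a [Ea Fa]; apply: nea; by exists a.
  case: (choice ex) => f fP.
  have finj : {in [set: nat] &, injective f}.
    move=> i j _ _ fij; apply: (uE i j (f i)); first by case: (fP i).
    by rewrite fij; case: (fP j).
  have : finite_set [set f x | x in [set: nat]].
    apply: sub_finite_set fF => a [k _ <-]; by case: (fP k).
  by rewrite (eq_finite_set (inj_card_eq finj)); exact: infinite_nat.
have fFE : finite_set (F `|` E n) by rewrite finite_setU; split => //; exact: fEn.
have H1 := HF (F `|` E n) fFE (@subsetUl _ F (E n)).
have H2 := HF F fF (@subset_refl _ F).
have := W2W _ _ H2 H1.
rewrite fsbigU0 //; last by rewrite setIC EnF.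
rewrite /= opprD opprK addrA (addrAC g) subrr add0r addKr.
rewrite (eq_fsbigr (fun a => val a *~ Z n a)); last first.
  by move=> a /set_mem Ea; rewrite (zE n).
exact: nW.
Qed.


Definition Fdef (p : {ptws I -> G}) : G :=
  if `[< S_A A p >] then kalton A p
  else xget 0 [set g | has_sum (fun a => p a) g].

Lemma Fdef_K h : S_A A h -> Fdef h = kalton A h.
Proof. by move=> Sh; rewrite /Fdef asboolT. Qed.

Lemma Fdef_sum : abs_summable A -> forall h, P_A A h -> has_sum (fun a => h a) (Fdef h).
Proof.
move=> AS h Ph; rewrite /Fdef; case: asboolP => [SA|_].
  have [_ fS] := SA; move=> U U0; exists [set a | h a != 0]; split => // E fE sE.
  rewrite (kalton_supp _ _ sE) subrr; exact: nbhs_singleton.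
apply: xgetPex.
have [z zP] : exists z : I -> int, forall a, h a = val a *~ z a.
  have [z zP] := @choice I int (fun a z => h a = val a *~ z) Ph.
  by exists z => a; exact: zP.
have [g Hg] := AS z; exists g => /=.
have -> : (fun a => h a) = (fun a => val a *~ z a) by apply: boolp.funext => a; exact: zP.
exact: Hg.
Qed.

Lemma Fdef_cont : abs_summable A -> {within P_A A, continuous Fdef}.
Proof.
move=> AS; apply/subspace_continuousP => h Ph V /= V0.
have U0 := nbhs_shift0 _ _ V0.
have [W1 W10 W1U] := nbhs0_add _ U0.
have [W2 W20 W2W] := nbhs0_add _ W10.
have [F0 fF0 UC] := unif_cauchy AS _ W20.
have [F2 [fF2 Hh]] := Fdef_sum AS _ Ph _ (nbhs0_opp _ W20).
have := @cont_fsum I F0 h W2 fF0 W20.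
rewrite /within; apply: filterS => p /= Wp Pp.
have [F1 [fF1 Hp]] := Fdef_sum AS _ Pp _ W20.
pose E := F0 `|` F1 `|` F2.
have fE : finite_set E by rewrite /E !finite_setU.
have sF1 : F1 `<=` E by move=> a ?; left; right.
have sF2 : F2 `<=` E by move=> a ?; right.
have sF0 : F0 `<=` E by move=> a ?; left; left.
have a1 := Hp E fE sF1.
have a2 := Hh E fE sF2.
have [zp zpP] := @choice I int (fun a z => p a = val a *~ z) Pp.
have [zh zhP] := @choice I int (fun a z => h a = val a *~ z) Ph.
have fEF : finite_set (E `&` ~` F0) by apply: finite_setIl.
have dEF : (E `&` ~` F0) `&` F0 = set0 by rewrite -setIA setICl setI0.
have a4 := UC (E `&` ~` F0) (fun a => zp a - zh a) fEF dEF.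
have eqE : \sum_(a \in E) p a - \sum_(a \in E) h a =
    \sum_(a \in F0) (p a - h a) + \sum_(a \in E `&` ~` F0) (val a *~ (zp a - zh a)).
  rewrite -fsumB // (fsbigID F0) // (setIidr sF0) /=; congr (_ + _).
  by apply: eq_fsbigr => a _; rewrite mulrzBr -zpP -zhP.
have := W1U _ _ (W2W _ _ a1 a2) (W2W _ _ Wp a4).
rewrite -eqE /=.
by rewrite -zmod_id.
Qed.

End T.

Theorem proposition7p1 (G : topologicalZmodType) (A : set G) :
  hausdorff_space G -> ~ A 0 ->
  (abs_summable A <->
     ({within S_A A, continuous (kalton A)} /\
      exists F : {ptws Aidx A -> G} -> G,
        {within P_A A, continuous F} /\
        (forall h, S_A A h -> F h = kalton A h)))
  /\
  (abs_summable A ->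
     forall F : {ptws Aidx A -> G} -> G,
       {within P_A A, continuous F} ->
       (forall h, S_A A h -> F h = kalton A h) ->
       forall h, P_A A h ->
         has_sum (fun a => kalton A (kcoord A a (h a))) (F h)).
Proof.
move=> _ _; split; first split.
- move=> AS; have cF := Fdef_cont A AS; split; last first.
    by exists (Fdef A); split => //; exact: (Fdef_K A).
  have sSP : S_A A `<=` P_A A by move=> h [].
  have := continuous_subspaceW sSP cF.
  apply: subspace_eq_continuous => h /set_mem Sh.
  exact: (Fdef_K A).
- move=> [_ [F [cF FK]]] z.
  pose h : {ptws Aidx A -> G} := fun a => val a *~ z a.
  have Ph : P_A A h by move=> a; exists (z a).
  by exists (F h); exact: (ext_has_sum A F cF FK h Ph).
- move=> _ F cF FK h Ph.
  have -> : (fun a => kalton A (kcoord A a (h a))) = (fun a => h a).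
    by apply: boolp.funext => a; rewrite kcoordK.
  exact: (ext_has_sum A F cF FK h Ph).
Qed.
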